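(* Let $\mathcal{Z}$ be a finite pretraining dataset with $|\mathcal{Z}|=m$ and $\mathcal{X}$ a finite finetuning dataset with $|\mathcal{X}|=n$. Let $g(z,W,U)$ be a pretraining loss and $f(x,W,\Theta)$ a finetuning loss, where $W\in\mathbb{R}^{p}$ are shared (embedding) parameters, $U\in\mathbb{R}^{q}$ are pretraining-specific parameters and $\Theta\in\mathbb{R}^{s}$ are finetuning-specific parameters. Define $$G(W,U)=\frac{1}{m}\sum_{z\in\mathcal{Z}}g(z,W,U),\qquad F(W,\Theta)=\frac{1}{n}\sum_{x\in\mathcal{X}}f(x,W,\Theta),$$ $$(W^*,U^* )=\arg\min_{W,U}G(W,U),\qquad \Theta^*=\arg\min_{\Theta}F(W^*,\Theta).$$ For a pretraining example $z$ and a scalar $\epsilon$, define the perturbed solutions $$(\hat W_\epsilon,\hat U_\epsilon)=\arg\min_{W,U}\big\{G(W,U)+\epsilon\, g(z,W,U)\big\},\qquad \hat\Theta_\epsilon=\arg\min_{\Theta}F(\hat W_\epsilon,\Theta),$$ so that $\hat W_0=W^*$, $\hat U_0=U^*$, $\hat\Theta_0=\Theta^*$ (i.e. $W$ is kept fixed during finetuning). Then $$I_{z,W}:=\frac{\partial \hat W_\epsilon}{\partial\epsilon}\Big|_{\epsilon=0}=-\left[\Big(\frac{\partial^2 G(W^*,U^* )}{\partial (W,U)^2}\Big)^{-1}\frac{\partial g(z,W^*,U^* )}{\partial (W,U)}\right]_W$$ and $$I_{z,\Theta}:=\frac{\partial \hat \Theta_\epsilon}{\partial\epsilon}\Big|_{\epsilon=0}=\Big(\frac{\partial^2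 F(W^*,\Theta^* )}{\partial \Theta^2}\Big)^{-1}\frac{\partial^2 F(W^*,\Theta^* )}{\partial \Theta\,\partial W}\left[\Big(\frac{\partial^2 G(W^*,U^* )}{\partial (W,U)^2}\Big)^{-1}\frac{\partial g(z,W^*,U^* )}{\partial (W,U)}\right]_W .$$
   Context: $\frac{\partial}{\partial(W,U)}$ denotes the gradient with respect to the concatenated parameter vector $[W,U]\in\mathbb{R}^{p+q}$, and $\frac{\partial^2 G}{\partial (W,U)^2}$ the corresponding $(p+q)\times(p+q)$ Hessian. $\frac{\partial^2 F}{\partial\Theta^2}$ is the $s\times s$ Hessian of $F$ in $\Theta$, and $\frac{\partial^2 F}{\partial\Theta\,\partial W}$ is the $s\times p$ matrix of mixed second partial derivatives (the Jacobian with respect to $W$ of $\nabla_\Theta F$). For a vector $v\in\mathbb{R}^{p+q}$, $[v]_W\in\mathbb{R}^p$ denotes its $W$-part (first $p$ coordinates). It is assumed that $g$ and $f$ are twice continuously differentiable, the minimizers above are well defined and depend differentiably on $\epsilon$ near $0$, and the Hessians $\frac{\partial^2 G(W^*,U^* )}{\partial (W,U)^2}$ and $\frac{\partial^2 F(W^*,\Theta^* )}{\partial\Theta^2}$ are invertible. *)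

(* Defs.v *)
From HB Require Import structures.
From mathcomp Require Import all_boot all_order all_algebra.
From mathcomp Require Import all_classical all_reals all_analysis.
Set Implicit Arguments. Unset Strict Implicit. Unset Printing Implicit Defensive.
Import Order.TTheory GRing.Theory Num.Theory.
Import numFieldNormedType.Exports.
Local Open Scope ring_scope.

Section Defs.
Variable R : realType.

Definition partial k (i : 'I_k) (h : 'cV[R]_k -> R) (x : 'cV[R]_k) : R :=
  'D_(delta_mx i 0) h x.

Definition grad k (h : 'cV[R]_k -> R) (x : 'cV[R]_k) : 'cV[R]_k :=
  \col_i partial i h x.

Definition hessian k (h : 'cV[R]_k -> R) (x : 'cV[R]_k) : 'M[R]_k :=
  \matrix_(i, j) partial j (partial i h) x.

Definition C2 k (h : 'cV[R]_k -> R) : Prop :=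
  (forall x, differentiable h x) /\
  (forall i x, differentiable (partial i h) x) /\
  (forall i j, continuous (partial j (partial i h))).

Definition joint p q (h : 'cV[R]_p -> 'cV[R]_q -> R) : 'cV[R]_(p + q) -> R :=
  fun v => h (usubmx v) (dsubmx v).

Definition avg (T : finType) p q (l : T -> 'cV[R]_p -> 'cV[R]_q -> R)
  : 'cV[R]_p -> 'cV[R]_q -> R :=
  fun W U => (#|T|%:R)^-1 * \sum_(t : T) l t W U.

Definition is_argmin (X : Type) (h : X -> R) (x : X) : Prop :=
  (forall y, h x <= h y) /\ (forall y, h y <= h x -> y = x).

Definition hess_Theta p s (F : 'cV[R]_p -> 'cV[R]_s -> R) W Th : 'M[R]_s :=
  hessian (F W) Th.

Definition mixed_Theta_W p s (F : 'cV[R]_p -> 'cV[R]_s -> R) W Th : 'M[R]_(s, p) :=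
  \matrix_(i, j) partial j (fun W' => partial i (F W') Th) W.

End Defs.

(* Main.v *)
Require Import Defs.
From HB Require Import structures.
From mathcomp Require Import all_boot all_order all_algebra.
From mathcomp Require Import all_classical all_reals all_analysis.
Import Order.TTheory GRing.Theory Num.Theory.
Import numFieldNormedType.Exports.
Local Open Scope ring_scope.
From mathcomp Require Import lra.

Set Implicit Arguments.
Section H.
Variable R : realType.

Lemma first_order k (h : 'cV[R]_k -> R) x v :
  (forall y, differentiable h y) -> (forall t : R, h x <= h (t *: v + x)) ->
  'D_v h x = 0.
Proof.
move=> dh hmin.
pose phi := fun t : R => h (t *: v + x).
have -> : 'D_v h x = 'D_1 phi 0.
  rewrite /derive /phi /=.
  suff -> : (fun t : R => t^-1 *: (h ((t%:A + 0) *: v + x) - h (0 *: v + x))) =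
    (fun t => t^-1 *: (h (t *: v + x) - h x)) by [].
  by apply: funext => t; rewrite addr0 scale0r add0r [_%:A]mulr1.
have dphi : forall t, derivable phi t 1.
  move=> t; apply/derivable1_diffP; rewrite /phi.
  apply: (@differentiable_comp _ _ _ _ (fun t : R => t *: v + x) h).
    apply: differentiableD; last exact: differentiable_cst.
    exact: differentiableZl.
  exact: dh.
have := @derive1_at_min R phi (-1) 1 0 _ (fun t _ => dphi t) _ _.
move=> H; rewrite (@derive_val _ _ _ _ _ _ _ (H _ _ _)) //.
- by rewrite in_itv /= ltrN10 ltr01.
- by move=> t _; rewrite /phi scale0r add0r; exact: hmin.
Qed.
Lemma col_expand k (w : 'cV[R]_k) : w = \sum_j w j 0 *: delta_mx j 0.
Proof.
rewrite {1}(matrix_sum_delta w); apply: eq_bigr => j _.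
by rewrite big_ord1.
Qed.

Lemma chain k (P : 'cV[R]_k -> R) (c : R -> 'cV[R]_k) :
  differentiable P (c 0) -> derivable c 0 1 ->
  derivable (P \o c) 0 1 /\
  'D_1 (P \o c) 0 = \sum_j ('D_1 c 0) j 0 * partial j P (c 0).
Proof.
move=> dP /derivable1_diffP dc.
have dPc : differentiable (P \o c) 0 by exact: differentiable_comp.
split; first exact: diff_derivable.
rewrite deriveE // diff_comp // /= -(@deriveE _ _ _ c 0 1 dc).
set w := 'D_1 c 0.
rewrite [in LHS](col_expand w) linear_sum; apply: eq_bigr => j _.
by rewrite linearZ /= /partial -deriveE.
Qed.

Lemma col_derive p q (A : R -> 'cV[R]_p) (B : R -> 'cV[R]_q) :
  derivable A 0 1 -> derivable B 0 1 ->
  derivable (fun t => col_mx (A t) (B t)) 0 1 /\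
  'D_1 (fun t => col_mx (A t) (B t)) 0 = col_mx ('D_1 A 0) ('D_1 B 0).
Proof.
move=> dA dB.
have dAe := (derivable_mxP A 0 1).1 dA.
have dBe := (derivable_mxP B 0 1).1 dB.
have dC : derivable (fun t => col_mx (A t) (B t)) 0 1.
  apply/derivable_mxP => i j.
  rewrite -(splitK i); case: (fintype.split i) => i' /=.
    have -> : (fun x => col_mx (A x) (B x) (lshift q i') j) = (fun x => A x i' j).
      by apply: funext => x; rewrite col_mxEu.
    exact: dAe.
  have -> : (fun x => col_mx (A x) (B x) (rshift p i') j) = (fun x => B x i' j).
    by apply: funext => x; rewrite col_mxEd.
  exact: dBe.
split => //.
rewrite derive_mx // (derive_mx dA) (derive_mx dB).
apply/matrixP => i j.
rewrite -(splitK i); case: (fintype.split i) => i' /=.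
  rewrite mxE col_mxEu mxE.
  have -> : (fun x => col_mx (A x) (B x) (lshift q i') j) = (fun x => A x i' j).
    by apply: funext => x; rewrite col_mxEu.
  by [].
rewrite mxE col_mxEd mxE.
have -> : (fun x => col_mx (A x) (B x) (rshift p i') j) = (fun x => B x i' j).
  by apply: funext => x; rewrite col_mxEd.
by [].
Qed.

Lemma zero_deriv (phi : R -> R) (delta : R) : 0 < delta ->
  (forall e, `|e| < delta -> phi e = 0) -> 'D_1 phi 0 = 0.
Proof.
move=> d0 H.
rewrite (@near_eq_derive _ _ _ phi (cst 0) 0 1) ?derive_cst //.
near=> e; apply: H; near: e; exists delta => // y /=; rewrite sub0r normrN.
Unshelve. all: by end_near.
Qed.

Lemma delta_l p q (j : 'I_p) :
  delta_mx (lshift q j) 0 = col_mx (delta_mx j 0) (0 : 'cV[R]_q).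
Proof.
apply/matrixP => a b.
rewrite -(splitK a); case: (fintype.split a) => a' /=.
  by rewrite col_mxEu !mxE (inj_eq (@lshift_inj p q)).
by rewrite col_mxEd !mxE eq_rlshift.
Qed.

Lemma delta_r p q (j : 'I_q) :
  delta_mx (rshift p j) 0 = col_mx (0 : 'cV[R]_p) (delta_mx j 0).
Proof.
apply/matrixP => a b.
rewrite -(splitK a); case: (fintype.split a) => a' /=.
  by rewrite col_mxEu !mxE eq_lrshift.
by rewrite col_mxEd !mxE (inj_eq (@rshift_inj p q)).
Qed.

Lemma transfer_r p s (J : 'cV[R]_(p + s) -> R) (W : 'cV[R]_p) (Th v : 'cV[R]_s) :
  'D_v (fun Th' => J (col_mx W Th')) Th = 'D_(col_mx 0 v) J (col_mx W Th).
Proof.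
rewrite /derive /=.
have -> : (fun h : R => h^-1 *: (J (col_mx W (h *: v + Th)) - J (col_mx W Th))) =
  (fun h : R => h^-1 *: (J (h *: col_mx 0 v + col_mx W Th) - J (col_mx W Th))).
  by apply: funext => h; rewrite scale_col_mx scaler0 add_col_mx add0r.
by [].
Qed.

Lemma transfer_l p s (J : 'cV[R]_(p + s) -> R) (W v : 'cV[R]_p) (Th : 'cV[R]_s) :
  'D_v (fun W' => J (col_mx W' Th)) W = 'D_(col_mx v 0) J (col_mx W Th).
Proof.
rewrite /derive /=.
have -> : (fun h : R => h^-1 *: (J (col_mx (h *: v + W) Th) - J (col_mx W Th))) =
  (fun h : R => h^-1 *: (J (h *: col_mx v 0 + col_mx W Th) - J (col_mx W Th))).
  by apply: funext => h; rewrite scale_col_mx scaler0 add_col_mx add0r.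
by [].
Qed.

Definition D2 k (h : 'cV[R]_k -> R) :=
  (forall x, differentiable h x) /\ (forall i x, differentiable (partial i h) x).


Lemma partial_add k (h1 h2 : 'cV[R]_k -> R) i x :
  differentiable h1 x -> differentiable h2 x ->
  partial i (fun v => h1 v + h2 v) x = partial i h1 x + partial i h2 x.
Proof.
move=> d1 d2; rewrite /partial.
have -> : (fun v => h1 v + h2 v) = (h1 + h2)%R by [].
by rewrite deriveD //; exact: diff_derivable.
Qed.

Lemma partial_scale k (h : 'cV[R]_k -> R) (a : R) i x :
  differentiable h x ->
  partial i (fun v => a * h v) x = a * partial i h x.
Proof.
move=> d; rewrite /partial.
have -> : (fun v => a * h v) = a \*: h by [].
by rewrite deriveZ //; exact: diff_derivable.
Qed.

Lemma D2_add k (h1 h2 : 'cV[R]_k -> R) : D2 h1 -> D2 h2 -> D2 (fun v => h1 v + h2 v).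
Proof.
move=> [d1 p1] [d2 p2]; split.
  move=> x; have -> : (fun v => h1 v + h2 v) = (h1 + h2)%R by [].
  exact: differentiableD.
move=> i x.
have -> : partial i (fun v => h1 v + h2 v) = (partial i h1 + partial i h2)%R.
  by apply: funext => y; rewrite partial_add.
exact: differentiableD.
Qed.

Lemma D2_scale k (h : 'cV[R]_k -> R) a : D2 h -> D2 (fun v => a * h v).
Proof.
move=> [d1 p1]; split.
  move=> x; have -> : (fun v => a * h v) = a \*: h by [].
  exact: differentiableZ.
move=> i x.
have -> : partial i (fun v => a * h v) = a \*: partial i h.
  by apply: funext => y; rewrite partial_scale.
exact: differentiableZ.
Qed.

Lemma D2_cst k : D2 (fun _ : 'cV[R]_k => 0).
Proof.
split; first by move=> x; exact: differentiable_cst.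
move=> i x.
have -> : partial i (fun _ : 'cV[R]_k => 0) = cst 0.
  by apply: funext => y; rewrite /partial derive_cst.
exact: differentiable_cst.
Qed.

Lemma D2_sum (T : Type) k (h : T -> 'cV[R]_k -> R) (r : seq T) :
  (forall t, D2 (h t)) -> D2 (fun v => \sum_(t <- r) h t v).
Proof.
move=> H; elim: r => [|a r IH].
  have -> : (fun v => \sum_(t <- [::]) h t v) = (fun _ => 0).
    by apply: funext => v; rewrite big_nil.
  exact: D2_cst.
have -> : (fun v => \sum_(t <- a :: r) h t v) =
  (fun v => h a v + \sum_(t <- r) h t v).
  by apply: funext => v; rewrite big_cons.
exact: D2_add.
Qed.

Lemma D2_avg (T : finType) p q (l : T -> 'cV[R]_p -> 'cV[R]_q -> R) :
  (forall t, C2 (joint (l t))) -> D2 (joint (avg l)).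
Proof.
move=> H.
have -> : joint (avg l) = (fun v => (#|T|%:R)^-1 * \sum_(t : T) joint (l t) v) by [].
apply: D2_scale; apply: D2_sum => t.
by have [? [? _]] := H t.
Qed.

Lemma D2_C2 k (h : 'cV[R]_k -> R) : C2 h -> D2 h.
Proof. by move=> [? [? _]]. Qed.

End H.
Unset Implicit Arguments.

Theorem theorem1 (R : realType) (p q s : nat)
  (Zset Xset : finType)
  (g : Zset -> 'cV[R]_p -> 'cV[R]_q -> R)
  (f : Xset -> 'cV[R]_p -> 'cV[R]_s -> R)
  (z : Zset)
  (What : R -> 'cV[R]_p) (Uhat : R -> 'cV[R]_q) (Thhat : R -> 'cV[R]_s)
  (delta : R) :
  (forall t, C2 (joint (g t))) ->
  (forall x, C2 (joint (f x))) ->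
  0 < delta ->
  (* perturbed pretraining solution: unique minimizer of G + eps * g(z,.) *)
  (forall eps, `|eps| < delta ->
     is_argmin (fun WU : 'cV[R]_p * 'cV[R]_q =>
                  avg g WU.1 WU.2 + eps * g z WU.1 WU.2)
               (What eps, Uhat eps)) ->
  (* finetuning with W fixed: unique minimizer of F(What eps, .) *)
  (forall eps, `|eps| < delta ->
     is_argmin (avg f (What eps)) (Thhat eps)) ->
  (* differentiable dependence on eps near 0 *)
  (forall eps, `|eps| < delta ->
     derivable What eps 1 /\ derivable Uhat eps 1 /\ derivable Thhat eps 1) ->
  (* invertible Hessians at the unperturbed solutions *)
  hessian (joint (avg g)) (col_mx (What 0) (Uhat 0)) \in unitmx ->
  hess_Theta (avg f) (What 0) (Thhat 0) \in unitmx ->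
  let HG := hessian (joint (avg g)) (col_mx (What 0) (Uhat 0)) in
  let gz := grad (joint (g z)) (col_mx (What 0) (Uhat 0)) in
  let v := usubmx (invmx HG *m gz) in
  derive1 What 0 = - v /\
  derive1 Thhat 0 =
    invmx (hess_Theta (avg f) (What 0) (Thhat 0))
      *m mixed_Theta_W (avg f) (What 0) (Thhat 0) *m v.
Proof.
move=> Cg Cf d0 argG argF dder HGu HFu HG gz v.
have h0 : `|0 : R| < delta by rewrite normr0.
have [dW0 [dU0 dT0]] := dder 0 h0.
set J := joint (avg g). set Jz := joint (g z).
have DJ : D2 R J := D2_avg _ _ Cg.
have DJz : D2 R Jz := D2_C2 (Cg z).
pose c := fun e => col_mx (What e) (Uhat e).
have [dc cd] := col_derive dW0 dU0.
have foc : forall i e, `|e| < delta ->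
    partial i J (c e) + e * partial i Jz (c e) = 0.
  move=> i e he.
  have DH := D2_add DJ (D2_scale e DJz).
  rewrite -(partial_scale _ _ (DJz.1 _)) -partial_add;
    [| exact: DJ.1 | exact: (D2_scale e DJz).1].
  apply: first_order DH.1 _ => t.
  have := (argG e he).1 (usubmx (t *: delta_mx i 0 + c e), dsubmx (t *: delta_mx i 0 + c e)).
  by rewrite /J /Jz /joint /c /= col_mxKu col_mxKd.
have eq1 : forall i, (HG *m 'D_1 c 0) i 0 + gz i 0 = 0.
  move=> i.
  have Z := @zero_deriv R (fun e => partial i J (c e) + e * partial i Jz (c e)) delta d0 (foc i).
  have [dP DP] := chain (DJ.2 i (c 0)) dc.
  have [dQ _] := chain (DJz.2 i (c 0)) dc.
  move: Z.
  have -> : (fun e => partial i J (c e) + e * partial i Jz (c e)) =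
    ((partial i J \o c) + ((@id R) * (partial i Jz \o c)))%R by [].
  rewrite deriveD //; last exact: derivableM.
  rewrite deriveM // DP derive_id scale0r add0r => Z'.
  apply: (etrans _ Z').
  rewrite /HG /gz /hessian /grad !mxE; congr (_ + _).
    by apply: eq_bigr => j _; rewrite !mxE mulrC.
  by rewrite /= [_ *: 1]mulr1.
have E : HG *m 'D_1 c 0 = - gz.
  apply/matrixP => i j; rewrite (ord1 j) [in RHS]mxE.
  by apply/eqP; rewrite -addr_eq0; apply/eqP; exact: eq1.
have E2 : 'D_1 c 0 = - (invmx HG *m gz).
  by rewrite -(mulKmx HGu ('D_1 c 0)) E mulmxN.
have cd' : 'D_1 c 0 = col_mx ('D_1 What 0) ('D_1 Uhat 0) := cd.
have usubN : forall (A : 'cV[R]_(p + q)), usubmx (- A) = - usubmx A.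
  by move=> A; rewrite -[in LHS](vsubmxK A) opp_col_mx col_mxKu.
have Wd : 'D_1 What 0 = - v.
  by rewrite -(col_mxKu ('D_1 What 0) ('D_1 Uhat 0)) -cd' E2 usubN.
split; first by rewrite derive1E.
set F := avg f. set JF := joint F.
have DJF : D2 R JF := D2_avg _ _ Cf.
pose c2 := fun e => col_mx (What e) (Thhat e).
have [dc2 cd2] := col_derive dW0 dT0.
have cd2' : 'D_1 c2 0 = col_mx ('D_1 What 0) ('D_1 Thhat 0) := cd2.
have foc2 : forall i e, `|e| < delta -> partial (rshift p i) JF (c2 e) = 0.
  move=> i e he; apply: first_order DJF.1 _ => t.
  rewrite delta_r /c2 scale_col_mx scaler0 add_col_mx add0r /JF /joint !col_mxKu !col_mxKd.
  exact: (argF e he).1.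
have FW : forall W', F W' = (fun Th' => JF (col_mx W' Th')).
  by move=> W'; apply: funext => Th'; rewrite /JF /joint col_mxKu col_mxKd.
set HT := hess_Theta F (What 0) (Thhat 0).
set Mx := mixed_Theta_W F (What 0) (Thhat 0).
have PiF : forall i W' Th', partial i (F W') Th' = partial (rshift p i) JF (col_mx W' Th').
  by move=> i W' Th'; rewrite /partial FW transfer_r -delta_r.
have eq2 : forall i, (Mx *m 'D_1 What 0) i 0 + (HT *m 'D_1 Thhat 0) i 0 = 0.
  move=> i.
  have Z := @zero_deriv R (fun e => partial (rshift p i) JF (c2 e)) delta d0 (foc2 i).
  have [_ DP] := chain (DJF.2 (rshift p i) (c2 0)) dc2.
  move: Z.
  have -> : (fun e => partial (rshift p i) JF (c2 e)) = (partial (rshift p i) JF \o c2) by [].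
  rewrite DP => Z; apply: (etrans _ Z).
  rewrite big_split_ord /= !mxE; congr (_ + _).
    apply: eq_bigr => j _; rewrite cd2' col_mxEu mulrC; congr (_ * _).
    rewrite /Mx /mixed_Theta_W mxE.
    have -> : (fun W' => partial i (F W') (Thhat 0)) =
        (fun W' => partial (rshift p i) JF (col_mx W' (Thhat 0))).
      by apply: funext => W'; rewrite PiF.
    have T := transfer_l R (partial (rshift p i) JF) (What 0) (delta_mx j 0) (Thhat 0).
    by rewrite -delta_l in T; exact: T.
  apply: eq_bigr => j _; rewrite cd2' col_mxEd mulrC; congr (_ * _).
  rewrite /HT /hess_Theta /hessian mxE.
  have -> : partial i (F (What 0)) =
      (fun Th' => partial (rshift p i) JF (col_mx (What 0) Th')).
    by apply: funext => Th'; rewrite PiF.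
  have T := transfer_r R (partial (rshift p i) JF) (What 0) (Thhat 0) (delta_mx j 0).
  by rewrite -delta_r in T; exact: T.
have E3 : HT *m 'D_1 Thhat 0 = Mx *m v.
  apply/matrixP => i j; rewrite (ord1 j).
  have := eq2 i; rewrite Wd mulmxN [X in X + _ = _]mxE addrC.
  by move/eqP; rewrite addr_eq0 opprK => /eqP.
by rewrite derive1E -(mulKmx HFu ('D_1 Thhat 0)) E3 mulmxA.
Qed.
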